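(* If $Q \subset M_\mathbb{R}$ is a lattice polytope that is not $2$-normal, then $\Sigma_Q$ is a proper subset of $P_Q$.
   Context: Let $M$ be an $m$-dimensional affine lattice, $M_\mathbb{R}:=M\otimes_\mathbb{Z}\mathbb{R}$, and $\mathbb{R}[M]$ the group ring (Laurent polynomials). For $f=\sum c_{\mathbf u}z^{\mathbf u}$, $\operatorname{New}(f):=\operatorname{conv}\{\mathbf u: c_{\mathbf u}\ne 0\}$, and $f\ge 0$ means $f$ is nonnegative at every real point of the torus $T=\operatorname{Spec}(\mathbb{R}[M])$. For an $m$-dimensional lattice polytope $Q\subset M_\mathbb{R}$, set $P_Q:=\{f\in\mathbb{R}[M]: \operatorname{New}(f)\subseteq 2Q,\ f\ge 0\}$ and $\Sigma_Q:=\{f = g_1^2+\dotsb+g_k^2 : g_j\in\mathbb{R}[M],\ \operatorname{New}(g_j)\subseteq Q\}$. $Q$ is $2$-normal if every lattice point of $2Q$ is a sum of two lattice points of $Q$. *)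

(* Defs.v *)
From HB Require Import structures.
From mathcomp Require Import all_boot all_order all_algebra.
From mathcomp Require Import finmap.
From mathcomp Require Import reals.

Set Implicit Arguments.
Unset Strict Implicit.
Unset Printing Implicit Defensive.

Import Order.TTheory GRing.Theory Num.Theory.
Local Open Scope ring_scope.

(* The lattice M is identified with Z^m (row vectors of integers), so
   M_R = R^m, and R[M] is the ring of real Laurent polynomials in m
   variables. *)

Definition lat (m : nat) := 'rV[int]_m.

Definition laurent (R : realType) (m : nat) := {fsfun lat m -> R with 0}.

Definition supp (R : realType) (m : nat) (f : laurent R m) : seq (lat m) :=
  enum_fset (finsupp f).

Definition toR (R : realType) (m : nat) (u : lat m) : 'rV[R]_m :=
  map_mx (fun z : int => z%:~R) u.

Arguments toR R {m} u.

Definition in_conv (R : realType) (m : nat) (S : seq 'rV[R]_m) (y : 'rV[R]_m) :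
    Prop :=
  exists w : 'I_(size S) -> R,
    [/\ forall i, 0 <= w i, \sum_i w i = 1 & y = \sum_i w i *: S`_i].

Definition polyQ (R : realType) (m : nat) (V : seq (lat m)) : 'rV[R]_m -> Prop :=
  in_conv (map (@toR R m) V).

Arguments polyQ R {m} V _.

Definition dil (R : realType) (m : nat) (k : R) (Q : 'rV[R]_m -> Prop)
    (y : 'rV[R]_m) : Prop :=
  exists2 q, Q q & y = k *: q.

(* conv(V) is m-dimensional: V nonempty and the affine span of V is R^m,
   i.e. the differences v - v_0 (v in V) have rank m. *)
Definition full_dim (R : realType) (m : nat) (V : seq (lat m)) : Prop :=
  V != [::] /\
  \rank (\matrix_(i < size V) (toR R V`_i - toR R V`_0)) = m.

Arguments full_dim R {m} V.

Definition New (R : realType) (m : nat) (f : laurent R m) : 'rV[R]_m -> Prop :=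
  in_conv (map (@toR R m) (supp f)).

Definition New_sub (R : realType) (m : nat) (f : laurent R m)
    (P : 'rV[R]_m -> Prop) : Prop :=
  forall y, New f y -> P y.

Definition ev (R : realType) (m : nat) (f : laurent R m) (x : 'rV[R]_m) : R :=
  \sum_(u <- supp f) f u * \prod_(i < m) (x ord0 i) ^ (u ord0 i).

Definition real_torus (R : realType) (m : nat) (x : 'rV[R]_m) : Prop :=
  forall i, x ord0 i != 0.

Definition nonneg (R : realType) (m : nat) (f : laurent R m) : Prop :=
  forall x, real_torus x -> 0 <= ev f x.

Definition sq_coef (R : realType) (m : nat) (g : laurent R m) (u : lat m) : R :=
  \sum_(v <- supp g) \sum_(w <- supp g) (if v + w == u then g v * g w else 0).

Definition P_Q (R : realType) (m : nat) (V : seq (lat m)) (f : laurent R m) :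
    Prop :=
  New_sub f (dil 2 (polyQ R V)) /\ nonneg f.

Arguments P_Q R {m} V f.

Definition Sigma_Q (R : realType) (m : nat) (V : seq (lat m)) (f : laurent R m) :
    Prop :=
  exists gs : seq (laurent R m),
    (forall g, g \in gs -> New_sub g (polyQ R V)) /\
    (forall u, f u = \sum_(g <- gs) sq_coef g u).

Arguments Sigma_Q R {m} V f.

Definition two_normal (R : realType) (m : nat) (V : seq (lat m)) : Prop :=
  forall u : lat m, dil 2 (polyQ R V) (toR R u) ->
    exists v w : lat m, [/\ polyQ R V (toR R v), polyQ R V (toR R w) & u = v + w].

Arguments two_normal R {m} V.

(* Main.v *)
Require Import Defs.
From HB Require Import structures.
From mathcomp Require Import all_boot all_order all_algebra.
From mathcomp Require Import finmap.
From mathcomp Require Import reals.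
From mathcomp Require Import boolp sequences exp.
Import Order.TTheory GRing.Theory Num.Theory.
Set Implicit Arguments. Unset Strict Implicit.
Local Open Scope ring_scope.


Section Conv.
Variables (R : realType) (m : nat).

Lemma conv_mem (S : seq 'rV[R]_m) s : s \in S -> in_conv S s.
Proof.
move=> sS; have kS : (index s S < size S)%N by rewrite index_mem.
pose k := Ordinal kS.
exists (fun i => (i == k)%:R); split.
- by move=> i; rewrite ler0n.
- by rewrite (bigD1 k) //= eqxx big1 ?addr0 // => i /negPf ->.
- rewrite (bigD1 k) //= eqxx scale1r big1 ?addr0 ?nth_index //.
  by move=> i /negPf ->; rewrite scale0r.
Qed.

Lemma conv_closed (S T : seq 'rV[R]_m) y :
  (forall s, s \in S -> in_conv T s) -> in_conv S y -> in_conv T y.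
Proof.
move=> hS [mu [mu0 mu1 ->]].
have : forall j : 'I_(size S), exists w : 'I_(size T) -> R,
    [/\ forall i, 0 <= w i, \sum_i w i = 1 & S`_j = \sum_i w i *: T`_i].
  by move=> j; apply: hS; apply: mem_nth.
case/choice => W hW.
exists (fun i => \sum_j mu j * W j i); split.
- by move=> i; apply: sumr_ge0 => j _; apply: mulr_ge0 => //; case: (hW j).
- rewrite exchange_big /= -mu1; apply: eq_bigr => j _.
  by rewrite -mulr_sumr; case: (hW j) => _ -> _; rewrite mulr1.
- apply/esym; rewrite (eq_bigr (fun i => \sum_j mu j * W j i *: T`_i)); last first.
    by move=> i _; rewrite scaler_suml.
  rewrite exchange_big /=; apply: eq_bigr => j _.
  case: (hW j) => _ _ ->; rewrite scaler_sumr; apply: eq_bigr => i _.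
  by rewrite scalerA.
Qed.

Lemma sum_cast (V : zmodType) n1 n2 (E : n1 = n2) (F : 'I_n2 -> V) :
  \sum_(i < n1) F (cast_ord E i) = \sum_i F i.
Proof. by subst; apply: eq_bigr => i _; rewrite cast_ord_id. Qed.

Lemma dil2E (T : seq 'rV[R]_m) y :
  dil 2 (in_conv T) y <-> in_conv (map (fun t => 2 *: t) T) y.
Proof.
have E := size_map (fun t : 'rV[R]_m => 2 *: t) T.
have nthE (i : 'I_(size (map (fun t => 2 *: t) T))) :
    (map (fun t => 2 *: t) T)`_i = 2 *: T`_(cast_ord E i).
  by rewrite (nth_map 0) // -E.
split.
- case=> q [w [w0 w1 ->]] ->.
  exists (fun i => w (cast_ord E i)); split => //.
  + by rewrite sum_cast.
  + under [RHS]eq_bigr do rewrite nthE.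
    rewrite (@sum_cast _ _ _ E (fun i => w i *: (2 *: T`_i))) scaler_sumr.
    by apply: eq_bigr => i _; rewrite !scalerA mulrC.
- case=> w [w0 w1 ->].
  exists (\sum_j w (cast_ord (esym E) j) *: T`_j).
    exists (fun j => w (cast_ord (esym E) j)); split => //.
    by rewrite sum_cast.
  rewrite scaler_sumr -(@sum_cast _ _ _ (esym E)).
  apply: eq_bigr => i _; rewrite nthE !scalerA mulrC.
  by congr (_ *: _); congr (_ `_ _); apply: val_inj.
Qed.

Lemma conv_mid (T : seq 'rV[R]_m) a b :
  in_conv T a -> in_conv T b -> in_conv (map (fun t => 2 *: t) T) (a + b).
Proof.
case=> wa [wa0 wa1 ->] [wb [wb0 wb1 ->]].
apply/dil2E; exists (2^-1 *: (\sum_i wa i *: T`_i + \sum_i wb i *: T`_i)).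
  exists (fun i => 2^-1 * (wa i + wb i)); split.
  - by move=> i; apply: mulr_ge0; rewrite ?invr_ge0 ?ler0n ?addr_ge0.
  - by rewrite -mulr_sumr big_split /= wa1 wb1 mulVf // pnatr_eq0.
  - rewrite scalerDr !scaler_sumr -big_split /=; apply: eq_bigr => i _.
    by rewrite !scalerA -scalerDl mulrDr.
by rewrite scalerA mulfV ?scale1r // pnatr_eq0.
Qed.
End Conv.


Section Ev.
Variables (R : realType) (m : nat).

Definition mono (x : 'rV[R]_m) (u : lat m) : R :=
  \prod_(i < m) (x ord0 i) ^ (u ord0 i).

Lemma in_supp (f : laurent R m) w : (w \in supp f) = (f w != 0).
Proof. by rewrite /supp -mem_finsupp. Qed.

Lemma uniq_supp (f : laurent R m) : uniq (supp f).
Proof. exact: fset_uniq. Qed.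

Lemma ev_over (f : laurent R m) S x : uniq S -> {subset supp f <= S} ->
  ev f x = \sum_(w <- S) f w * mono x w.
Proof.
move=> uS sub; rewrite -(@big_rmcond_in _ _ _ _ S (fun w => f w != 0)); last first.
  by move=> i _; rewrite negbK => /eqP ->; rewrite mul0r.
rewrite -big_filter /ev; apply: perm_big; apply: uniq_perm.
- exact: uniq_supp.
- exact: filter_uniq.
move=> w; rewrite mem_filter in_supp; apply/idP/idP.
  by move=> h; rewrite h /=; apply: sub; rewrite in_supp.
by case/andP.
Qed.

Lemma mono_add x v w : real_torus x -> mono x (v + w) = mono x v * mono x w.
Proof.
move=> hx; rewrite /mono -big_split /=; apply: eq_bigr => i _.
by rewrite mxE expfzDr.
Qed.

Lemma toR_add (v w : lat m) : toR R (v + w) = toR R v + toR R w.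
Proof. by apply/matrixP => i j; rewrite !mxE rmorphD. Qed.

Lemma New_in (f : laurent R m) T y :
  (forall w, f w != 0 -> in_conv T (toR R w)) -> New f y -> in_conv T y.
Proof.
move=> h; apply: conv_closed => s /mapP [w ws ->]; apply: h.
by rewrite -in_supp.
Qed.

Lemma sum_neq0 (I : eqType) (s : seq I) (F : I -> R) :
  \sum_(i <- s) F i != 0 -> exists2 i, i \in s & F i != 0.
Proof.
move=> h; have [/hasP [i iS Fi]|nh] := boolP (has (fun i => F i != 0) s).
  by exists i.
move: h; rewrite big1_seq ?eqxx // => i /andP [_ iS]; apply/eqP.
by apply: contraNT nh => Fi; apply/hasP; exists i.
Qed.

Lemma sq_ev (g : laurent R m) S x : real_torus x -> uniq S ->
  (forall v w, v \in supp g -> w \in supp g -> v + w \in S) ->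
  \sum_(u <- S) sq_coef g u * mono x u = ev g x ^+ 2.
Proof.
move=> hx uS hS; rewrite /sq_coef.
under eq_bigr do rewrite mulr_suml.
under eq_bigr do under eq_bigr do rewrite mulr_suml.
rewrite exchange_big /=.
under eq_bigr do rewrite exchange_big /=.
rewrite expr2 /ev mulr_suml; apply: eq_big_seq => v vs.
rewrite mulr_sumr; apply: eq_big_seq => w ws.
rewrite (bigD1_seq (v + w)) /=; [|by apply: hS|by []].
rewrite eqxx big1 ?addr0.
  by rewrite mono_add // /mono mulrACA.
by move=> u; rewrite eq_sym => /negPf ->; rewrite mul0r.
Qed.
End Ev.


Lemma part1 (R : realType) (m : nat) (V : seq (lat m)) (f : laurent R m) :
  Sigma_Q R V f -> P_Q R V f.
Proof.
case=> gs [hg hf]; split.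
- move=> y Ny; apply/dil2E; apply: (New_in _ Ny) => u.
  rewrite hf => /sum_neq0 [g gin].
  rewrite /sq_coef => /sum_neq0 [v vs] /sum_neq0 [w ws].
  case: (v + w =P u) => [<- _|]; last by rewrite eqxx.
  rewrite toR_add; apply: conv_mid.
  + by apply: (hg g gin); apply: conv_mem; apply: map_f.
  + by apply: (hg g gin); apply: conv_mem; apply: map_f.
- move=> x hx.
  pose S := undup (supp f ++ flatten [seq [seq v + w | v <- supp g, w <- supp g] | g <- gs]).
  rewrite (ev_over (S := S)); first last.
  + by move=> w ws; rewrite mem_undup mem_cat ws.
  + exact: undup_uniq.
  under eq_bigr do rewrite hf mulr_suml.
  rewrite exchange_big big_seq /=; apply: sumr_ge0 => g gin.
  rewrite (sq_ev hx (undup_uniq _)) ?sqr_ge0 // => v w vs ws.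
  rewrite mem_undup mem_cat; apply/orP; right; apply/flattenP.
  exists [seq v + w | v <- supp g, w <- supp g]; first exact: map_f.
  by apply/allpairsP; exists (v, w).
Qed.


Section Logs.
Variable (R : realType).

Lemma expz_exp (a : R) (z : int) : 0 < a -> a ^ z = expR (z%:~R * ln a).
Proof.
move=> a0; case: z => n.
- change ((Posz n)%:~R : R) with (n%:R : R).
  by rewrite expRM_natl lnK.
- rewrite NegzE -invr_expz mulrNz mulNr expRN.
  change ((Posz n.+1)%:~R : R) with (n.+1%:R : R).
  by rewrite expRM_natl lnK.
Qed.

Lemma normz (a : R) (z : int) : `|a ^ z| = `|a| ^ z.
Proof.
case: z => n; first exact: normrX.
by rewrite NegzE -!invr_expz normfV normrX.
Qed.
End Logs.

Section Key.
Variables (R : realType) (m : nat).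

Definition Lf (t : 'I_m -> R) (y : 'rV[R]_m) := \sum_j y ord0 j * t j.

Lemma Lf_add t y z : Lf t (y + z) = Lf t y + Lf t z.
Proof. by rewrite /Lf -big_split; apply: eq_bigr => j _; rewrite mxE mulrDl. Qed.

Lemma Lf_scale t c y : Lf t (c *: y) = c * Lf t y.
Proof. by rewrite /Lf mulr_sumr; apply: eq_bigr => j _; rewrite mxE mulrA. Qed.

Lemma Lf_sum t n (F : 'I_n -> 'rV[R]_m) : Lf t (\sum_i F i) = \sum_i Lf t (F i).
Proof.
rewrite /Lf; under eq_bigr do rewrite summxE mulr_suml.
by rewrite exchange_big.
Qed.

Lemma absmono (x : 'rV[R]_m) (w : lat m) : real_torus x ->
  `|mono x w| = expR (Lf (fun j => ln `|x ord0 j|) (toR R w)).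
Proof.
move=> hx; rewrite /mono normr_prod /Lf expR_sum; apply: eq_bigr => j _.
by rewrite normz expz_exp ?normr_gt0 ?hx // mxE.
Qed.

Lemma mono_dbl (x : 'rV[R]_m) (v : lat m) : real_torus x -> 0 <= mono x (v + v).
Proof. by move=> hx; rewrite mono_add // -expr2 sqr_ge0. Qed.

Lemma key (V : seq (lat m)) (u : lat m) (x : 'rV[R]_m) : V != [::] -> real_torus x ->
  dil 2 (polyQ R V) (toR R u) ->
  exists2 v, v \in V & `|mono x u| <= mono x (v + v).
Proof.
move=> V0 hx [q [lam [l0 l1 ->]] Eu].
set T := map (toR R) V.
have sz : (0 < size T)%N by rewrite size_map lt0n size_eq0.
pose t := fun j => ln `|x ord0 j|.
pose a i := Lf t T`_i.
have [k ak] : exists k : 'I_(size T), forall i : 'I_(size T), a i <= a k.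
  exists (Order.arg_max (Ordinal sz) xpredT (fun i : 'I_(size T) => a i)); move=> i.
  by case: arg_maxP => // j _ /(_ i isT).
have kV : (k < size V)%N by rewrite -(size_map (toR R)).
exists V`_k; first exact: mem_nth.
rewrite -[mono x (_ + _)]ger0_norm ?mono_dbl // !absmono // ler_expR.
rewrite Eu toR_add Lf_add Lf_scale Lf_sum.
have -> : Lf t (toR R V`_k) = a k by rewrite /a /T (nth_map 0).
have h : \sum_i Lf t (lam i *: T`_i) <= a k.
  rewrite (eq_bigr (fun i => lam i * a i)); last by move=> i _; rewrite Lf_scale.
  apply: le_trans (_ : \sum_i lam i * a k <= _).
    by apply: ler_sum => i _; apply: ler_wpM2l.
  by rewrite -mulr_suml l1 mul1r.
by rewrite mulr2n mulrDl mul1r; apply: lerD.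
Qed.
End Key.


Lemma part2 (R : realType) (m : nat) (V : seq (lat m)) :
  V != [::] -> ~ two_normal R V ->
  exists f : laurent R m, P_Q R V f /\ ~ Sigma_Q R V f.
Proof.
move=> V0 /existsNP [u] /not_implyP [hu nd].
have nd' : forall v w : lat m, polyQ R V (toR R v) -> polyQ R V (toR R w) ->
    u <> v + w.
  by move=> v w hv hw E; apply: nd; exists v, w.
pose D := map (fun v : lat m => v + v) V.
pose S := u :: undup D.
have uD : u \notin D.
  apply/negP => /mapP [v vV E]; apply: (nd' v v) E;
    by apply: conv_mem; apply: map_f.
have uS : uniq S by rewrite /S /= mem_undup uD undup_uniq.
pose f : laurent R m := [fsfun w in (seq_fset tt S) => (1 : R) | 0].
have fE w : f w = if w \in S then 1 else 0.
  by rewrite /f fsfun_fun seq_fsetE.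
exists f; split; first split.
- move=> y Ny; apply/dil2E; apply: (New_in _ Ny) => w.
  rewrite fE; case: ifP => [|_]; last by rewrite eqxx.
  rewrite inE mem_undup => /orP [/eqP ->|/mapP [v vV ->]] _.
    by apply/dil2E.
  by rewrite toR_add; apply: conv_mid; apply: conv_mem; apply: map_f.
- move=> x hx.
  rewrite (ev_over (S := S)) //; last first.
    by move=> w; rewrite in_supp fE; case: ifP => //; rewrite eqxx.
  rewrite big_cons fE mem_head mul1r.
  rewrite (eq_big_seq (fun w => mono x w)); last first.
    by move=> w wD; rewrite fE inE wD orbT mul1r.
  have [v vV hv] := key V0 hx hu.
  have vD : v + v \in undup D by rewrite mem_undup; apply: map_f.
  rewrite (bigD1_seq _ vD (undup_uniq _)) /=.
  have h0 : 0 <= \sum_(i <- undup D | i != v + v) mono x i.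
    rewrite big_seq_cond; apply: sumr_ge0 => w /andP [].
    by rewrite mem_undup => /mapP [z _ ->] _; apply: mono_dbl.
  have h1 := ler_norm (- mono x u); rewrite normrN in h1.
  have h2 := le_trans h1 hv.
  rewrite -subr_ge0 in h2.
  by rewrite addrA; apply: addr_ge0 => //; rewrite addrC; move: h2; rewrite opprK.
- case=> gs [hg hf]; move: (hf u); rewrite fE mem_head.
  rewrite big1_seq; first by move/eqP; rewrite oner_eq0.
  move=> g /andP [_ gin]; rewrite /sq_coef big1_seq // => v /andP [_ vs].
  rewrite big1_seq // => w /andP [_ ws].
  case: (v + w =P u) => // E; exfalso; apply: (nd' v w) (esym E).
    by apply: (hg g gin); apply: conv_mem; apply: map_f.
  by apply: (hg g gin); apply: conv_mem; apply: map_f.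
Qed.

Unset Implicit Arguments.

Theorem lemma6p2 (R : realType) (m : nat) (V : seq (lat m)) :
  full_dim R V -> ~ two_normal R V ->
  (forall f : laurent R m, Sigma_Q R V f -> P_Q R V f) /\
  (exists f : laurent R m, P_Q R V f /\ ~ Sigma_Q R V f).
Proof.
move=> [V0 _] nT; split; first by move=> f; exact: part1.
exact: part2.
Qed.
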